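(* Let $v=v(z)=zM(z)$, where $M(z)=\frac{1-z-\sqrt{1-2z-3z^2}}{2z^2}$ (so $z=\frac{v}{1+v+v^2}$). The total number of leaves over all Retakh plane trees, counted by number of nodes, has generating function $$\sum_{\tau}\mathrm{leaves}(\tau)\,z^{|\tau|}=\frac{v(1+v)(1-v+2v^2-v^3)}{(1-v)(1+v+v^2)},$$ where the sum runs over all Retakh plane trees $\tau$, $|\tau|$ is the number of nodes, and $\mathrm{leaves}(\tau)$ is the number of nodes with no children (the one-node tree has one leaf).
   Context: A Retakh plane tree is a plane (ordered rooted) tree in which every non-root leaf has depth $1$ or even depth (root depth $0$); the one-node tree is included. These correspond to Dyck paths all of whose peaks are at level $1$ or at an even level, non-root leaves corresponding to peaks. *)

(* Defs.v *)
From Stdlib Require Import Reals Lra Arith List Bool.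
From Coquelicot Require Import Coquelicot.
Import ListNotations.
Open Scope nat_scope.

Inductive tree : Type := Node : list tree -> tree.

Fixpoint tsize (t : tree) : nat :=
  match t with
  | Node cs => S ((fix go (l : list tree) : nat :=
                     match l with [] => 0 | c :: l' => tsize c + go l' end) cs)
  end.

Fixpoint leaves (t : tree) : nat :=
  match t with
  | Node [] => 1
  | Node cs => (fix go (l : list tree) : nat :=
                  match l with [] => 0 | c :: l' => leaves c + go l' end) cs
  end.

(* leaves_ok d t : every leaf of the subtree t, whose root sits at depth d,
   has depth 1 or even depth *)
Fixpoint leaves_ok (d : nat) (t : tree) : bool :=
  match t with
  | Node [] => (d =? 1) || Nat.even d
  | Node cs => (fix go (l : list tree) : bool :=
                  match l with [] => true | c :: l' => leaves_ok (S d) c && go l' end) cs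
  end.

(* Retakh plane tree: every non-root leaf has depth 1 or even depth
   (root has depth 0); the one-node tree is included. *)
Definition retakh (t : tree) : bool :=
  match t with
  | Node cs => forallb (leaves_ok 1) cs
  end.

(* Enumeration: forests_aux fuel n = all ordered forests with n nodes in total
   (correct whenever fuel >= n). The first tree of a forest has k+1 nodes. *)
Fixpoint forests_aux (fuel n : nat) : list (list tree) :=
  match n with
  | 0 => [ [] ]
  | S _ =>
    match fuel with
    | 0 => []
    | S f =>
      flat_map (fun k =>
        flat_map (fun cs =>
          map (fun rest => Node cs :: rest) (forests_aux f (n - S k)))
          (forests_aux f k))
        (seq 0 n)
    end
  end.

Definition trees_of_size (n : nat) : list tree :=
  match n with
  | 0 => []
  | S m => map Node (forests_aux m m)
  end.

Definition total_leaves (n : nat) : nat :=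
  fold_right Nat.add 0 (map leaves (filter retakh (trees_of_size n))).

Open Scope R_scope.

Definition Mgf (z : R) : R := (1 - z - sqrt (1 - 2*z - 3*z^2)) / (2 * z^2).
Definition vgf (z : R) : R := z * Mgf z.

(* Main.v *)
Require Import Defs.
From Stdlib Require Import Reals Lra Lia Arith List Bool.
From Coquelicot Require Import Coquelicot.
Import ListNotations.
Open Scope R_scope.

Fixpoint rsum {A} (f : A -> R) (l : list A) : R :=
  match l with [] => 0 | a :: l => f a + rsum f l end.

Lemma rsum_app {A} (f : A -> R) l1 l2 : rsum f (l1 ++ l2) = rsum f l1 + rsum f l2.
Proof. induction l1; simpl; [lra| rewrite IHl1; lra]. Qed.
Lemma rsum_flat_map {A B} (f : B -> R) (g : A -> list B) l :
  rsum f (flat_map g l) = rsum (fun a => rsum f (g a)) l.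
Proof. induction l; simpl; [lra| rewrite rsum_app, IHl; lra]. Qed.
Lemma rsum_map {A B} (f : B -> R) (g : A -> B) l : rsum f (map g l) = rsum (fun a => f (g a)) l.
Proof. induction l; simpl; [lra| rewrite IHl; lra]. Qed.
Lemma rsum_ext_in {A} (f g : A -> R) l : (forall x, In x l -> f x = g x) -> rsum f l = rsum g l.
Proof. induction l; simpl; intros H; [lra|]. rewrite H, IHl; auto. Qed.
Lemma rsum_scal {A} (f : A -> R) c l : rsum (fun a => c * f a) l = c * rsum f l.
Proof. induction l; simpl; [lra| rewrite IHl; lra]. Qed.
Lemma rsum_plus {A} (f g : A -> R) l : rsum (fun a => f a + g a) l = rsum f l + rsum g l.
Proof. induction l; simpl; [lra| rewrite IHl; lra]. Qed.
Lemma rsum_prod {A B} (f : A -> R) (g : B -> R) l1 l2 :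
  rsum (fun a => rsum (fun b => f a * g b) l2) l1 = rsum f l1 * rsum g l2.
Proof. induction l1; simpl; [lra|]. rewrite rsum_scal, IHl1. lra. Qed.
Lemma rsum_nonneg {A} (f : A -> R) l : (forall x, 0 <= f x) -> 0 <= rsum f l.
Proof. intros H; induction l; simpl; [lra| specialize (H a); lra]. Qed.
Lemma rsum_seq (g : nat -> R) n : rsum g (seq 0 (S n)) = sum_f_R0 g n.
Proof. induction n. simpl; lra. rewrite seq_S, rsum_app, IHn. simpl. lra. Qed.

Lemma flat_map_ext_in {A B} (f g : A -> list B) l :
  (forall x, In x l -> f x = g x) -> flat_map f l = flat_map g l.
Proof. induction l; simpl; intros H; auto. rewrite H, IHl; auto. Qed.
Lemma map_ext_in' {A B} (f g : A -> B) l :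
  (forall x, In x l -> f x = g x) -> map f l = map g l.
Proof. induction l; simpl; intros H; auto. rewrite H, IHl; auto. Qed.

Lemma fa_unf f n : forests_aux (S f) (S n) = flat_map (fun k =>
        flat_map (fun cs =>
          map (fun rest => Node cs :: rest) (forests_aux f (S n - S k)))
          (forests_aux f k))
        (seq 0 (S n)).
Proof. reflexivity. Qed.

Lemma fuel : forall f f' n, (n <= f)%nat -> (n <= f')%nat -> forests_aux f n = forests_aux f' n.
Proof.
  induction f; intros f' n H1 H2.
  - destruct n; [destruct f'; reflexivity| lia].
  - destruct n; [destruct f'; reflexivity|].
    destruct f'; [lia|]. rewrite !fa_unf.
    apply flat_map_ext_in. intros k Hk. apply in_seq in Hk.
    rewrite (IHf f' k) by lia.
    apply flat_map_ext_in. intros cs _. 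
    rewrite (IHf f' (S n - S k)%nat) by lia. reflexivity.
Qed.

Lemma forests_S m : forests_aux (S m) (S m) =
  flat_map (fun k => flat_map (fun cs => map (fun rest => Node cs :: rest)
     (forests_aux (m - k) (m - k))) (forests_aux k k)) (seq 0 (S m)).
Proof.
  destruct m as [|m]; [reflexivity|]. rewrite fa_unf. apply flat_map_ext_in. intros k Hk. apply in_seq in Hk.
  rewrite (fuel (S m) k k) by lia. apply flat_map_ext_in. intros cs _.
  replace (S (S m) - S k)%nat with (S m - k)%nat by lia. rewrite (fuel (S m) (S m - k) (S m-k)) by lia. reflexivity.
Qed.

Lemma forests_nonempty f n cs : In cs (forests_aux f (S n)) -> cs <> [].
Proof.
  destruct f; [simpl; tauto|]. rewrite fa_unf. intros H. apply in_flat_map in H as [k [_ H]].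
  apply in_flat_map in H as [c [_ H]]. apply in_map_iff in H as [r [<- _]]. discriminate.
Qed.

Lemma leaves_ok_ne d cs : cs <> [] -> leaves_ok d (Node cs) = forallb (leaves_ok (S d)) cs.
Proof.
  destruct cs as [|c l]; [congruence|]. intros _. simpl. f_equal.
Qed.

Fixpoint lsum (l : list tree) : nat := match l with [] => 0%nat | t :: l => (leaves t + lsum l)%nat end.

Lemma leaves_ne cs : cs <> [] -> leaves (Node cs) = lsum cs.
Proof.
  destruct cs as [|c l]; [congruence|]. intros _. simpl. f_equal.
Qed.

Definition okf d (f : list tree) := forallb (leaves_ok d) f.
Definition ind (b : bool) : R := if b then 1 else 0.
Definition cF d n := rsum (fun f => ind (okf d f)) (forests_aux n n).
Definition lF d n := rsum (fun f => ind (okf d f) * INR (lsum f)) (forests_aux n n).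
Definition lok (d : nat) : R := ind ((d =? 1)%nat || Nat.even d).
Definition ifz (c : R) (a : nat -> R) (k : nat) : R := match k with 0%nat => c | S _ => a k end.
Definition conv (t b : nat -> R) (m : nat) : R := sum_f_R0 (fun k => t k * b (m - k)%nat) m.

Lemma ind_and a b : ind (a && b) = ind a * ind b.
Proof. destruct a, b; simpl; lra. Qed.

Lemma tree_cnt d k : rsum (fun cs => ind (leaves_ok d (Node cs))) (forests_aux k k) = ifz (lok d) (cF (S d)) k.
Proof.
  destruct k.
  - simpl. unfold lok. lra.
  - simpl ifz. unfold cF. apply rsum_ext_in. intros cs Hc.
    rewrite leaves_ok_ne; [reflexivity|]. exact (forests_nonempty _ _ _ Hc).
Qed.

Lemma tree_lv d k : rsum (fun cs => ind (leaves_ok d (Node cs)) * INR (leaves (Node cs))) (forests_aux k k) = ifz (lok d) (lF (S d)) k.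
Proof.
  destruct k.
  - simpl. unfold lok. lra.
  - simpl ifz. unfold lF. apply rsum_ext_in. intros cs Hc.
    pose proof (forests_nonempty _ _ _ Hc).
    rewrite leaves_ok_ne, leaves_ne by assumption. reflexivity.
Qed.

Lemma cF_0 d : cF d 0 = 1.
Proof. unfold cF; simpl. unfold okf; simpl. lra. Qed.
Lemma lF_0 d : lF d 0 = 0.
Proof. unfold lF; simpl. lra. Qed.

Lemma cF_S d m : cF d (S m) = conv (ifz (lok d) (cF (S d))) (cF d) m.
Proof.
  unfold cF at 1. rewrite forests_S, rsum_flat_map, rsum_seq. unfold conv.
  apply sum_eq. intros k _. rewrite rsum_flat_map.
  rewrite <- tree_cnt. unfold cF. rewrite <- rsum_prod.
  apply rsum_ext_in. intros cs _. rewrite rsum_map. apply rsum_ext_in. intros r _.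
  unfold okf. simpl. apply ind_and.
Qed.

Lemma lF_S d m : lF d (S m) = conv (ifz (lok d) (lF (S d))) (cF d) m + conv (ifz (lok d) (cF (S d))) (lF d) m.
Proof.
  unfold lF at 1. rewrite forests_S, rsum_flat_map, rsum_seq. unfold conv.
  rewrite <- sum_plus.
  apply sum_eq. intros k _. rewrite rsum_flat_map.
  rewrite <- tree_cnt, <- tree_lv. unfold cF, lF. rewrite <- !rsum_prod, <- rsum_plus.
  apply rsum_ext_in. intros cs _. rewrite rsum_map, <- rsum_plus. apply rsum_ext_in. intros r _.
  unfold okf. simpl lsum. simpl forallb. rewrite ind_and, plus_INR. simpl. ring.
Qed.

Fixpoint tree_ind2 (P : tree -> Prop) (Q : list tree -> Prop) (hnil : Q [])
  (hcons : forall t l, P t -> Q l -> Q (t :: l)) (hnode : forall l, Q l -> P (Node l)) (t : tree) : P t :=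
  match t with
  | Node l => hnode l ((fix go (l : list tree) : Q l :=
       match l with [] => hnil | t :: l' => hcons t l' (tree_ind2 P Q hnil hcons hnode t) (go l') end) l)
  end.

Definition Pper t := forall d, (2 <= d)%nat -> leaves_ok d t = leaves_ok (S (S d)) t.
Definition Qper l := forall d, (2 <= d)%nat -> forallb (leaves_ok d) l = forallb (leaves_ok (S (S d))) l.

Lemma per_tree : forall t, Pper t.
Proof.
  apply (tree_ind2 Pper Qper).
  - intros d _; reflexivity.
  - intros t l' Ht Hl d Hd. simpl. rewrite Ht, Hl by lia. reflexivity.
  - intros cs Hcs d Hd. destruct cs as [|c l'].
    + simpl. destruct d as [|[|d]]; [lia|lia|]. reflexivity.
    + rewrite !leaves_ok_ne by discriminate. apply Hcs. lia.
Qed.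

Lemma per_all : forall l d, (2 <= d)%nat -> forallb (leaves_ok d) l = forallb (leaves_ok (S (S d))) l.
Proof. induction l; intros d Hd; simpl; auto. rewrite (per_tree a d Hd), IHl; auto. Qed.

Lemma cF_per n : cF 4 n = cF 2 n.
Proof. unfold cF. apply rsum_ext_in. intros f _. unfold okf. rewrite (per_all f 2) by lia. reflexivity. Qed.
Lemma lF_per n : lF 4 n = lF 2 n.
Proof. unfold lF. apply rsum_ext_in. intros f _. unfold okf. rewrite (per_all f 2) by lia. reflexivity. Qed.

Lemma total_eq m : INR (total_leaves (S m)) = ifz 1 (lF 1) m.
Proof.
  unfold total_leaves, trees_of_size.
  assert (H: forall l, INR (fold_right Nat.add 0%nat (map leaves (filter retakh (map Node l))))
     = rsum (fun cs => ind (retakh (Node cs)) * INR (leaves (Node cs))) l).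
  { induction l; [reflexivity|]. cbn [map filter rsum]. rewrite <- IHl.
    destruct (retakh (Node a)); cbn [fold_right ind]; cbn [map fold_right]; rewrite ?plus_INR; lra. }
  rewrite H. destruct m.
  - simpl. lra.
  - simpl ifz. unfold lF. apply rsum_ext_in. intros cs Hc.
    pose proof (forests_nonempty _ _ _ Hc). rewrite leaves_ne by assumption. reflexivity.
Qed.

Lemma total_0 : total_leaves 0 = 0%nat.
Proof. reflexivity. Qed.

Lemma cF_nonneg d n : 0 <= cF d n.
Proof. apply rsum_nonneg. intros; unfold ind; destruct okf; lra. Qed.
Lemma lF_nonneg d n : 0 <= lF d n.
Proof. apply rsum_nonneg. intros; unfold ind; destruct okf; pose proof (pos_INR (lsum x)); nra. Qed.


Lemma tail1 (f : nat -> R) (L : R) : is_series f L -> is_series (fun k => f (S k)) (L - f 0%nat).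
Proof. intros H. apply is_series_incr_1.
  match goal with |- is_series _ ?t => replace t with L end. exact H.
  change (L = L - f 0%nat + f 0%nat). ring. Qed.
Lemma untail (f : nat -> R) (L : R) : is_series (fun k => f (S k)) L -> is_series f (L + f 0%nat).
Proof. intros H. apply is_series_decr_1.
  match goal with |- is_series _ ?t => replace t with L end. exact H.
  change (L = L + f 0%nat + - f 0%nat). ring. Qed.
Lemma lim_ser (f : nat -> R) (l:R) : is_lim_seq (sum_n f) l -> is_series f l.
Proof. intros H. exact H. Qed.
Lemma ser_lim (f : nat -> R) (l:R) : is_series f l -> is_lim_seq (sum_n f) l.
Proof. intros H. exact H. Qed.
Lemma ser_plus (f g : nat -> R) a b : is_series f a -> is_series g b -> is_series (fun n => f n + g n) (a + b).
Proof. intros Hf Hg. exact (is_series_plus f g a b Hf Hg). Qed.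

Definition PSm (a : nat -> R) x N := sum_f_R0 (fun n => a n * x ^ n) N.

Lemma Pm_ext a b x N : (forall n, a n = b n) -> PSm a x N = PSm b x N.
Proof. intros H. unfold PSm. apply sum_eq. intros i _. rewrite H. reflexivity. Qed.

Lemma conv_pow t b x m : conv t b m * x ^ m = sum_f_R0 (fun k => (t k * x ^ k) * (b (m - k)%nat * x ^ (m - k))) m.
Proof.
  unfold conv. rewrite Rmult_comm, scal_sum. apply sum_eq. intros k Hk.
  assert (E : x ^ m = x ^ k * x ^ (m - k)) by (rewrite <- pow_add; f_equal; lia).
  rewrite E. ring.
Qed.

Lemma Pm_conv_le t b x N : (forall n, 0 <= t n) -> (forall n, 0 <= b n) -> 0 <= x ->
  PSm (conv t b) x N <= PSm t x N * PSm b x N.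
Proof.
  intros Ht Hb Hx. unfold PSm.
  rewrite (sum_eq _ (fun m => sum_f_R0 (fun k => (t k * x ^ k) * (b (m - k)%nat * x ^ (m - k))) m))
    by (intros; apply conv_pow).
  destruct N. { apply Req_le. simpl. ring. }
  rewrite (cauchy_finite _ _ (S N)) by lia.
  assert (0 <= sum_f_R0 (fun k => sum_f_R0 (fun l => t (S (l + k)) * x ^ S (l + k) * (b (S N - l)%nat * x ^ (S N - l))) (Init.Nat.pred (S N - k))) (Init.Nat.pred (S N))).
  { apply cond_pos_sum. intros n. apply cond_pos_sum. intros l.
    apply Rmult_le_pos; apply Rmult_le_pos; auto; apply pow_le; auto. }
  lra.
Qed.

Lemma Pm_S a x N : PSm a x (S N) = a 0%nat + x * PSm (fun m => a (S m)) x N.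
Proof.
  unfold PSm. rewrite decomp_sum by lia. simpl Init.Nat.pred. rewrite scal_sum.
  f_equal. { simpl; ring. } apply sum_eq. intros i _. simpl. ring.
Qed.

Lemma Pm_ifz c a x N : PSm (ifz c a) x N = c - a 0%nat + PSm a x N.
Proof.
  induction N. { unfold PSm. simpl. ring. }
  unfold PSm in *. cbn [sum_f_R0]. rewrite IHN. simpl ifz. ring.
Qed.

Lemma Pm_plus a b x N : PSm (fun n => a n + b n) x N = PSm a x N + PSm b x N.
Proof. unfold PSm. rewrite <- sum_plus. apply sum_eq. intros; ring. Qed.

Lemma Pm_nonneg a x N : (forall n, 0 <= a n) -> 0 <= x -> 0 <= PSm a x N.
Proof. intros. unfold PSm. apply cond_pos_sum. intros n. apply Rmult_le_pos; auto. apply pow_le; auto. Qed.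

Lemma Pm_mono a x N : (forall n, 0 <= a n) -> 0 <= x -> PSm a x N <= PSm a x (S N).
Proof. intros. unfold PSm. cbn [sum_f_R0]. assert (0 <= a (S N) * x ^ S N) by (apply Rmult_le_pos; auto; apply pow_le; auto). lra. Qed.

Lemma ifz_nonneg c a n : 0 <= c -> (forall n, 0 <= a n) -> 0 <= ifz c a n.
Proof. intros; destruct n; simpl; auto. Qed.

Lemma conv_nonneg t b m : (forall n, 0 <= t n) -> (forall n, 0 <= b n) -> 0 <= conv t b m.
Proof. intros. unfold conv. apply cond_pos_sum. intros. apply Rmult_le_pos; auto. Qed.

Lemma ex_from_bound a x M : (forall n, 0 <= a n) -> 0 <= x -> (forall N, PSm a x N <= M) ->
  ex_series (fun n => a n * x ^ n).
Proof.
  intros Ha Hx HM.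
  destruct (growing_cv (PSm a x)) as [l Hl].
  - intros n. apply Pm_mono; auto.
  - exists M. intros y [n ->]. auto.
  - exists l. apply lim_ser. apply is_lim_seq_Reals in Hl.
    eapply is_lim_seq_ext; [|exact Hl]. intros n. rewrite sum_n_Reals. reflexivity.
Qed.

Lemma abs_term a z n : (forall n, 0 <= a n) -> Rabs (a n * z ^ n) = a n * Rabs z ^ n.
Proof. intros Ha. rewrite Rabs_mult, RPow_abs, (Rabs_pos_eq (a n)); auto. Qed.

Lemma exs a z M : (forall n, 0 <= a n) -> (forall N, PSm a (Rabs z) N <= M) ->
  ex_series (fun n => Rabs (a n * z ^ n)).
Proof.
  intros Ha HM. apply (ex_series_ext (fun n => a n * Rabs z ^ n)).
  - intros n. rewrite abs_term; auto.
  - apply (ex_from_bound a (Rabs z) M); auto. apply Rabs_pos.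
Qed.

Lemma bound_series a z S M : is_series (fun n => a n * z ^ n) S -> (forall n, 0 <= a n) ->
  (forall N, PSm a (Rabs z) N <= M) -> Rabs S <= M.
Proof.
  intros HS Ha HM. apply ser_lim in HS. apply is_lim_seq_abs in HS.
  assert (Hb : forall N, Rabs (sum_n (fun n => a n * z ^ n) N) <= M).
  2:{ exact (is_lim_seq_le _ _ _ _ Hb HS (is_lim_seq_const M)). }
  intros N. rewrite sum_n_Reals. eapply Rle_trans; [apply sum_f_R0_triangle|].
    eapply Rle_trans; [|apply (HM N)]. unfold PSm. apply Req_le. apply sum_eq. intros. apply abs_term; auto.
Qed.

Lemma series_conv t b z T B : is_series (fun n => t n * z ^ n) T -> is_series (fun n => b n * z ^ n) B ->
  ex_series (fun n => Rabs (t n * z ^ n)) -> ex_series (fun n => Rabs (b n * z ^ n)) ->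
  is_series (fun m => conv t b m * z ^ m) (T * B).
Proof.
  intros H1 H2 H3 H4. eapply is_series_ext; [|apply is_series_mult; eauto].
  intros m. simpl. rewrite conv_pow. reflexivity.
Qed.

Lemma series_shift a z L : is_series (fun m => a (S m) * z ^ m) L -> is_series (fun n => a n * z ^ n) (a 0%nat + z * L).
Proof.
  intros H. replace (a 0%nat + z * L) with (L * z + a 0%nat * z ^ 0) by (simpl; ring).
  apply (untail (fun n => a n * z ^ n)).
  eapply is_series_ext; [|exact (is_series_scal_r z _ _ H)]. intros n. simpl. ring.
Qed.

Lemma series_ifz c a z A : is_series (fun n => a n * z ^ n) A -> is_series (fun n => ifz c a n * z ^ n) (c - a 0%nat + A).
Proof.
  intros H. apply tail1 in H.
  replace (c - a 0%nat + A) with ((A - a 0%nat * z ^ 0) + ifz c a 0%nat * z ^ 0) by (simpl; ring).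
  apply (untail (fun n => ifz c a n * z ^ n)). exact H.
Qed.


Definition e := cF 2. Definition o := cF 3. Definition p := cF 1.
Definition qe := lF 2. Definition qo := lF 3. Definition q1 := lF 1.

Lemma conv_ext t t' b b' m : (forall k, t k = t' k) -> (forall k, b k = b' k) -> conv t b m = conv t' b' m.
Proof. intros H1 H2. unfold conv. apply sum_eq. intros. rewrite H1, H2. reflexivity. Qed.

Lemma rec_e m : e (S m) = conv (ifz 1 o) e m.
Proof. unfold e. rewrite cF_S. reflexivity. Qed.
Lemma rec_o m : o (S m) = conv (ifz 0 e) o m.
Proof. unfold o. rewrite cF_S. apply conv_ext; intros [|k]; try reflexivity. apply cF_per. Qed.
Lemma rec_p m : p (S m) = conv (ifz 1 e) p m.
Proof. unfold p. rewrite cF_S. reflexivity. Qed.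
Lemma rec_qe m : qe (S m) = conv (ifz 1 qo) e m + conv (ifz 1 o) qe m.
Proof. unfold qe. rewrite lF_S. reflexivity. Qed.
Lemma rec_qo m : qo (S m) = conv (ifz 0 qe) o m + conv (ifz 0 e) qo m.
Proof. unfold qo. rewrite lF_S. f_equal; apply conv_ext; intros [|k]; try reflexivity.
  apply lF_per. apply cF_per. Qed.
Lemma rec_q1 m : q1 (S m) = conv (ifz 1 qe) p m + conv (ifz 1 e) q1 m.
Proof. unfold q1. rewrite lF_S. reflexivity. Qed.

Lemma e_nn n : 0 <= e n. Proof. apply cF_nonneg. Qed.
Lemma o_nn n : 0 <= o n. Proof. apply cF_nonneg. Qed.
Lemma p_nn n : 0 <= p n. Proof. apply cF_nonneg. Qed.
Lemma qe_nn n : 0 <= qe n. Proof. apply lF_nonneg. Qed.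
Lemma qo_nn n : 0 <= qo n. Proof. apply lF_nonneg. Qed.
Lemma q1_nn n : 0 <= q1 n. Proof. apply lF_nonneg. Qed.
Lemma e0 : e 0%nat = 1. Proof. apply cF_0. Qed.
Lemma o0 : o 0%nat = 1. Proof. apply cF_0. Qed.
Lemma p0 : p 0%nat = 1. Proof. apply cF_0. Qed.
Lemma qe0 : qe 0%nat = 0. Proof. apply lF_0. Qed.
Lemma qo0 : qo 0%nat = 0. Proof. apply lF_0. Qed.
Lemma q10 : q1 0%nat = 0. Proof. apply lF_0. Qed.

Lemma ifz_nn c a : 0 <= c -> (forall n, 0 <= a n) -> forall n, 0 <= ifz c a n.
Proof. intros; apply ifz_nonneg; auto. Qed.

#[local] Hint Resolve e_nn o_nn p_nn qe_nn qo_nn q1_nn : nn.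

Lemma step1 a t b x N bt bb : (forall m, a (S m) = conv t b m) -> (forall n, 0 <= t n) -> (forall n, 0 <= b n) ->
  0 <= x -> PSm t x N <= bt -> PSm b x N <= bb ->
  PSm a x (S N) <= a 0%nat + x * (bt * bb).
Proof.
  intros Hr Ht Hb Hx H1 H2. rewrite Pm_S. rewrite (Pm_ext _ (conv t b)) by auto.
  pose proof (Pm_conv_le t b x N Ht Hb Hx).
  pose proof (Pm_nonneg t x N Ht Hx). pose proof (Pm_nonneg b x N Hb Hx).
  assert (PSm t x N * PSm b x N <= bt * bb) by (apply Rmult_le_compat; auto).
  apply Rplus_le_compat_l. apply Rmult_le_compat_l; auto. lra.
Qed.

Lemma step2 a t b t' b' x N bt bb bt' bb' : (forall m, a (S m) = conv t b m + conv t' b' m) ->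
  (forall n, 0 <= t n) -> (forall n, 0 <= b n) -> (forall n, 0 <= t' n) -> (forall n, 0 <= b' n) ->
  0 <= x -> PSm t x N <= bt -> PSm b x N <= bb -> PSm t' x N <= bt' -> PSm b' x N <= bb' ->
  PSm a x (S N) <= a 0%nat + x * (bt * bb + bt' * bb').
Proof.
  intros Hr Ht Hb Ht' Hb' Hx H1 H2 H3 H4. rewrite Pm_S.
  assert (E : PSm (fun m => a (S m)) x N = PSm (fun m => conv t b m + conv t' b' m) x N) by (apply Pm_ext; auto).
  rewrite E. rewrite Pm_plus.
  pose proof (Pm_conv_le t b x N Ht Hb Hx). pose proof (Pm_conv_le t' b' x N Ht' Hb' Hx).
  pose proof (Pm_nonneg t x N Ht Hx). pose proof (Pm_nonneg b x N Hb Hx).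
  pose proof (Pm_nonneg t' x N Ht' Hx). pose proof (Pm_nonneg b' x N Hb' Hx).
  assert (PSm t x N * PSm b x N <= bt * bb) by (apply Rmult_le_compat; auto).
  assert (PSm t' x N * PSm b' x N <= bt' * bb') by (apply Rmult_le_compat; auto).
  apply Rplus_le_compat_l. apply Rmult_le_compat_l; auto. lra.
Qed.

Section Bounds.
Variable v : R.
Hypothesis hv0 : 0 < v.
Hypothesis hv1 : v < 1.
Let D := 1 + v + v ^ 2.
Let x := v / D.
Let bA := 1 + v.
Let bB := D / (1 + v).
Let bP := D.
Let bQE := v * (1 + v) / ((1 - v) * D).
Let bQO := v ^ 2 / (1 - v ^ 2).
Let bQ1 := v * D * (1 + bQE).

Lemma D_pos : 0 < D. Proof. unfold D; nra. Qed.
Lemma x_nn : 0 <= x. Proof. unfold x. pose proof D_pos. apply Rlt_le, Rdiv_lt_0_compat; lra. Qed.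

Lemma bnd_EO N : PSm e x N <= bA /\ PSm o x N <= bB.
Proof.
  pose proof D_pos. pose proof x_nn.
  induction N as [|N [IH1 IH2]].
  - unfold PSm; simpl. rewrite e0, o0. unfold bA, bB.
    split; [lra|]. replace (D / (1 + v)) with (1 + v ^ 2 / (1 + v)) by (unfold D; field; lra).
    assert (0 <= v ^ 2 / (1 + v)) by (apply Rlt_le, Rdiv_lt_0_compat; nra). lra.
  - split.
    + eapply Rle_trans. apply (step1 e (ifz 1 o) e x N bB bA rec_e); auto with nn. apply ifz_nn; auto with nn; lra.
      rewrite Pm_ifz, o0. lra.
      rewrite e0. apply Req_le. unfold x, bA, bB, D. field. repeat split; nra.
    + eapply Rle_trans. apply (step1 o (ifz 0 e) o x N v bB rec_o); auto with nn. apply ifz_nn; auto with nn; lra.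
      rewrite Pm_ifz, e0. unfold bA in IH1. lra.
      rewrite o0. apply Req_le. unfold x, bA, bB, D. field. repeat split; nra.
Qed.

Lemma bnd_P N : PSm p x N <= bP.
Proof.
  pose proof D_pos. pose proof x_nn.
  induction N as [|N IH].
  - unfold PSm; simpl. rewrite p0. unfold bP, D. nra.
  - eapply Rle_trans. apply (step1 p (ifz 1 e) p x N bA bP rec_p); auto with nn. apply ifz_nn; auto with nn; lra.
    rewrite Pm_ifz, e0. destruct (bnd_EO N). lra.
    rewrite p0. apply Req_le. unfold x, bA, bP, D. field. repeat split; nra.
Qed.

Lemma bnd_Q N : PSm qe x N <= bQE /\ PSm qo x N <= bQO.
Proof.
  pose proof D_pos. pose proof x_nn.
  assert (0 <= bQE) by (unfold bQE; apply Rlt_le, Rdiv_lt_0_compat; nra).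
  assert (0 <= bQO) by (unfold bQO; apply Rlt_le, Rdiv_lt_0_compat; nra).
  induction N as [|N [IH1 IH2]].
  - unfold PSm; simpl. rewrite qe0, qo0. lra.
  - destruct (bnd_EO N) as [HE HO]. split.
    + eapply Rle_trans. apply (step2 qe (ifz 1 qo) e (ifz 1 o) qe x N (1 + bQO) bA bB bQE rec_qe); auto with nn;
        try (apply ifz_nn; auto with nn; lra).
      rewrite Pm_ifz, qo0. lra. rewrite Pm_ifz, o0. lra.
      rewrite qe0. apply Req_le. unfold x, bA, bB, bQE, bQO, D. field. repeat split; nra.
    + eapply Rle_trans. apply (step2 qo (ifz 0 qe) o (ifz 0 e) qo x N bQE bB v bQO rec_qo); auto with nn;
        try (apply ifz_nn; auto with nn; lra).
      rewrite Pm_ifz, qe0. lra. rewrite Pm_ifz, e0. unfold bA in HE. lra.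
      rewrite qo0. apply Req_le. unfold x, bA, bB, bQE, bQO, D. field. repeat split; nra.
Qed.

Lemma bnd_Q1 N : PSm q1 x N <= bQ1.
Proof.
  pose proof D_pos. pose proof x_nn.
  assert (0 <= bQE) by (unfold bQE; apply Rlt_le, Rdiv_lt_0_compat; nra).
  assert (0 <= bQ1) by (unfold bQ1; apply Rmult_le_pos; nra).
  induction N as [|N IH].
  - unfold PSm; simpl. rewrite q10. lra.
  - destruct (bnd_EO N) as [HE HO]. destruct (bnd_Q N) as [HQE HQO].
    eapply Rle_trans. apply (step2 q1 (ifz 1 qe) p (ifz 1 e) q1 x N (1 + bQE) bP bA bQ1 rec_q1); auto with nn;
        try (apply ifz_nn; auto with nn; lra).
    rewrite Pm_ifz, qe0. lra. apply bnd_P. rewrite Pm_ifz, e0. lra.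
    rewrite q10. apply Req_le. unfold x, bA, bP, bQ1, bQE, D. field. repeat split; nra.
Qed.

End Bounds.


Lemma vgf_facts x : 0 < x -> x < 1/3 -> (0 < vgf x < 1) /\ x = vgf x / (1 + vgf x + vgf x ^ 2).
Proof.
  intros h0 h1.
  assert (hD : 0 <= 1 - 2*x - 3*x^2) by nra.
  set (s := sqrt (1 - 2*x - 3*x^2)).
  assert (hs : s * s = 1 - 2*x - 3*x^2) by (apply sqrt_sqrt; auto).
  assert (hs0 : 0 <= s) by apply sqrt_pos.
  assert (Hv : vgf x = (1 - x - s) / (2 * x)) by (unfold vgf, Mgf; fold s; field; lra).
  rewrite Hv. set (w := (1 - x - s) / (2 * x)).
  assert (Hw : 2 * x * w = 1 - x - s) by (unfold w; field; lra).
  assert (s < 1 - x) by nra.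
  assert (1 - 3 * x < s) by nra.
  assert (0 < w) by (unfold w; apply Rdiv_lt_0_compat; lra).
  assert (w < 1) by nra.
  split; [lra|].
  assert (E : x * (1 + w + w^2) = w).
  { apply (Rmult_eq_reg_l (4 * x)); [|lra].
    replace (4 * x * (x * (1 + w + w ^ 2))) with ((2*x*w)^2 + x*(2*(2*x*w)) + 4*x^2) by ring.
    replace (4 * x * w) with (2 * (2 * x * w)) by ring. rewrite Hw. nra. }
  apply (Rmult_eq_reg_r (1 + w + w ^ 2)); [| nra]. unfold Rdiv. rewrite Rmult_assoc, Rinv_l by nra. nra.
Qed.

Lemma lc X Y L Rr c : L = Rr -> X - Y = c * (L - Rr) -> X = Y.
Proof. intros H1 H2. rewrite H1 in H2. lra. Qed.
Lemma lc2 X Y L1 R1 L2 R2 c1 c2 : L1 = R1 -> L2 = R2 -> X - Y = c1 * (L1 - R1) + c2 * (L2 - R2) -> X = Y.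
Proof. intros H1 H2 H3. rewrite H1, H2 in H3. lra. Qed.

Lemma alg z PE PO P1 QE QO Q1 : -(1/3) < z -> z < 1/3 -> z <> 0 -> Rabs (PE - 1) < 1 ->
  PE = 1 + z*((1 - 1 + PO) * PE) ->
  PO = 1 + z*((0 - 1 + PE) * PO) ->
  P1 = 1 + z*((1 - 1 + PE) * P1) ->
  QE = 0 + z*((1 - 0 + QO)*PE + (1 - 1 + PO)*QE) ->
  QO = 0 + z*((0 - 0 + QE)*PO + (0 - 1 + PE)*QO) ->
  Q1 = 0 + z*((1 - 0 + QE)*P1 + (1 - 1 + PE)*Q1) ->
  0 + z * (1 - 0 + Q1) =
  vgf z * (1 + vgf z) * (1 - vgf z + 2 * vgf z ^ 2 - vgf z ^ 3) / ((1 - vgf z) * (1 + vgf z + vgf z ^ 2)).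
Proof.
  intros hz1 hz2 hz0 Hw EqE EqO EqP EqQE EqQO EqQ1.
  set (w := PE - 1) in *.
  assert (HPE : PE = 1 + w) by (unfold w; ring). clearbody w. subst PE.
  apply Rabs_def2 in Hw. destruct Hw as [Hw1 Hw2].
  assert (G : z * w ^ 2 + (z - 1) * w + z = 0).
  { apply (lc2 _ _ _ _ _ _ (-(1 - z*w)) (-(z*(1+w))) EqE EqO). ring. }
  assert (Ed : 1 - 2*z - 3*z^2 = (-(2*z*w + z - 1))^2).
  { transitivity ((-(2*z*w+z-1))^2 - 4*z*(z * w ^ 2 + (z - 1) * w + z)); [ring | rewrite G; ring]. }
  assert (Hneg : 2*z*w < 1/3 * 2).
  { destruct (Rle_dec 0 z); nra. }
  assert (Hv : vgf z = w).
  { unfold vgf, Mgf. rewrite Ed, sqrt_pow2 by lra. field. auto. }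
  rewrite Hv.
  assert (HD : 0 < 1 + w + w^2) by nra.
  assert (Hz : z = w / (1 + w + w^2)).
  { apply (Rmult_eq_reg_r (1 + w + w^2)); [| lra]. unfold Rdiv. rewrite Rmult_assoc, Rinv_l by lra. nra. }
  subst z.
  assert (HPO : PO = (1 + w + w^2) / (1 + w)).
  { apply (lc _ _ _ _ ((1 + w + w^2) / (1 + w)) EqO). field. lra. }
  subst PO.
  assert (HP1 : P1 = (1 + w + w^2)).
  { apply (lc _ _ _ _ (1 + w + w^2) EqP). field. lra. }
  subst P1.
  assert (HQO : QO = w * (1 + w + w^2) * QE / (1 + w)^2).
  { apply (lc _ _ _ _ ((1 + w + w^2) / (1 + w)) EqQO). field. lra. }
  subst QO.
  assert (HQE : QE = w * (1 + w) / ((1 - w) * (1 + w + w^2))).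
  { apply (lc _ _ _ _ (1 / (1 - w)) EqQE). field. repeat split; lra. }
  subst QE.
  assert (HQ1 : Q1 = w * (1 + w + w^2) * (1 + w * (1 + w) / ((1 - w) * (1 + w + w^2)))).
  { apply (lc _ _ _ _ (1 + w + w^2) EqQ1). field. repeat split; lra. }
  subst Q1.
  field. repeat split; lra.
Qed.

Lemma pack a z : (forall n, 0 <= a n) -> (exists M, forall N, PSm a (Rabs z) N <= M) ->
  ex_series (fun n => Rabs (a n * z ^ n)) /\ is_series (fun n => a n * z ^ n) (Series (fun n => a n * z ^ n)).
Proof.
  intros Ha [M HM]. assert (H := exs a z M Ha HM). split; auto.
  apply Series_correct. apply ex_series_Rabs. exact H.
Qed.

Lemma pack_ifz a z c : 0 <= c -> (forall n, 0 <= a n) -> (exists M, forall N, PSm a (Rabs z) N <= M) ->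
  ex_series (fun n => Rabs (ifz c a n * z ^ n)).
Proof.
  intros Hc Ha [M HM]. apply (exs _ z (c - a 0%nat + M)).
  - intros; apply ifz_nonneg; auto.
  - intros N. rewrite Pm_ifz. specialize (HM N). lra.
Qed.

Lemma eq1 a t b z T B : (forall m, a (S m) = conv t b m) -> is_series (fun n => t n * z ^ n) T ->
  is_series (fun n => b n * z ^ n) B -> ex_series (fun n => Rabs (t n * z ^ n)) ->
  ex_series (fun n => Rabs (b n * z ^ n)) -> Series (fun n => a n * z ^ n) = a 0%nat + z * (T * B).
Proof.
  intros Hr H1 H2 H3 H4. apply is_series_unique. apply series_shift.
  eapply is_series_ext; [|apply (series_conv t b z T B); auto]. intros m; simpl. rewrite Hr. reflexivity.
Qed.

Lemma eq2 a t b t' b' z T B T' B' : (forall m, a (S m) = conv t b m + conv t' b' m) ->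
  is_series (fun n => t n * z ^ n) T -> is_series (fun n => b n * z ^ n) B ->
  is_series (fun n => t' n * z ^ n) T' -> is_series (fun n => b' n * z ^ n) B' ->
  ex_series (fun n => Rabs (t n * z ^ n)) -> ex_series (fun n => Rabs (b n * z ^ n)) ->
  ex_series (fun n => Rabs (t' n * z ^ n)) -> ex_series (fun n => Rabs (b' n * z ^ n)) ->
  Series (fun n => a n * z ^ n) = a 0%nat + z * (T * B + T' * B').
Proof.
  intros Hr H1 H2 H3 H4 H5 H6 H7 H8. apply is_series_unique. apply series_shift.
  eapply is_series_ext; [|apply ser_plus; [apply (series_conv t b z T B)|apply (series_conv t' b' z T' B')]; auto].
  intros m; simpl. rewrite Hr. ring.
Qed.

Theorem mainTheorem6 (z : R) (hz1 : -(1/3) < z) (hz2 : z < 1/3) (hz0 : z <> 0) :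
  is_series (fun n : nat => INR (total_leaves n) * z ^ n)
    (let v := vgf z in
     v * (1 + v) * (1 - v + 2 * v^2 - v^3) / ((1 - v) * (1 + v + v^2))).
Proof.
  cbv zeta.
  assert (hx0 : 0 < Rabs z) by (apply Rabs_pos_lt; auto).
  assert (hx1 : Rabs z < 1/3) by (apply Rabs_def1; lra).
  destruct (vgf_facts _ hx0 hx1) as [[hv0 hv1] hxv].
  set (vx := vgf (Rabs z)) in *.
  assert (BE : forall N, PSm e (Rabs z) N <= 1 + vx) by (intro N; rewrite hxv; apply bnd_EO; auto).
  assert (BO : exists M, forall N, PSm o (Rabs z) N <= M) by (eexists; intro N; rewrite hxv; apply bnd_EO; auto).
  assert (BP : exists M, forall N, PSm p (Rabs z) N <= M) by (eexists; intro N; rewrite hxv; apply bnd_P; auto).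
  assert (BQE : exists M, forall N, PSm qe (Rabs z) N <= M) by (eexists; intro N; rewrite hxv; apply bnd_Q; auto).
  assert (BQO : exists M, forall N, PSm qo (Rabs z) N <= M) by (eexists; intro N; rewrite hxv; apply bnd_Q; auto).
  assert (BQ1 : exists M, forall N, PSm q1 (Rabs z) N <= M) by (eexists; intro N; rewrite hxv; apply bnd_Q1; auto).
  assert (BE' : exists M, forall N, PSm e (Rabs z) N <= M) by (eexists; exact BE).
  destruct (pack e z e_nn BE') as [aE sE].
  destruct (pack o z o_nn BO) as [aO sO].
  destruct (pack p z p_nn BP) as [aP sP].
  destruct (pack qe z qe_nn BQE) as [aQE sQE].
  destruct (pack qo z qo_nn BQO) as [aQO sQO].
  destruct (pack q1 z q1_nn BQ1) as [aQ1 sQ1].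
  set (PE := Series (fun n => e n * z ^ n)) in *.
  set (PO := Series (fun n => o n * z ^ n)) in *.
  set (P1 := Series (fun n => p n * z ^ n)) in *.
  set (QE := Series (fun n => qe n * z ^ n)) in *.
  set (QO := Series (fun n => qo n * z ^ n)) in *.
  set (Q1 := Series (fun n => q1 n * z ^ n)) in *.
  assert (L1 : 0 <= 1) by lra. assert (L0 : 0 <= 0) by lra.
  assert (EqE := eq1 e _ _ z _ _ rec_e (series_ifz 1 o z _ sO) sE (pack_ifz o z 1 L1 o_nn BO) aE).
  assert (EqO := eq1 o _ _ z _ _ rec_o (series_ifz 0 e z _ sE) sO (pack_ifz e z 0 L0 e_nn BE') aO).
  assert (EqP := eq1 p _ _ z _ _ rec_p (series_ifz 1 e z _ sE) sP (pack_ifz e z 1 L1 e_nn BE') aP).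
  assert (EqQE := eq2 qe _ _ _ _ z _ _ _ _ rec_qe (series_ifz 1 qo z _ sQO) sE (series_ifz 1 o z _ sO) sQE
     (pack_ifz qo z 1 L1 qo_nn BQO) aE (pack_ifz o z 1 L1 o_nn BO) aQE).
  assert (EqQO := eq2 qo _ _ _ _ z _ _ _ _ rec_qo (series_ifz 0 qe z _ sQE) sO (series_ifz 0 e z _ sE) sQO
     (pack_ifz qe z 0 L0 qe_nn BQE) aO (pack_ifz e z 0 L0 e_nn BE') aQO).
  assert (EqQ1 := eq2 q1 _ _ _ _ z _ _ _ _ rec_q1 (series_ifz 1 qe z _ sQE) sP (series_ifz 1 e z _ sE) sQ1
     (pack_ifz qe z 1 L1 qe_nn BQE) aP (pack_ifz e z 1 L1 e_nn BE') aQ1).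
  fold PE PO P1 QE QO Q1 in EqE, EqO, EqP, EqQE, EqQO, EqQ1.
  rewrite e0, o0 in EqE. rewrite o0, e0 in EqO. rewrite p0, e0 in EqP.
  rewrite qe0, qo0, o0 in EqQE. rewrite qo0, qe0, e0 in EqQO. rewrite q10, qe0, e0 in EqQ1.
  assert (HW : Rabs (PE - 1) < 1).
  { assert (H := bound_series (ifz 0 e) z _ vx (series_ifz 0 e z _ sE) (ifz_nn 0 e L0 e_nn)).
    rewrite e0 in H. replace (PE - 1) with (0 - 1 + PE) by ring.
    eapply Rle_lt_trans; [apply H|exact hv1]. intros N. rewrite Pm_ifz, e0. specialize (BE N). lra. }
  assert (Hfin : is_series (fun n => INR (total_leaves n) * z ^ n) (0 + z * (1 - 0 + Q1))).
  { replace 0 with (INR (total_leaves 0)) at 1 by reflexivity.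
    apply (series_shift (fun n => INR (total_leaves n))).
    assert (H := series_ifz 1 q1 z _ sQ1). rewrite q10 in H.
    eapply is_series_ext; [|exact H].
    intros n. simpl. rewrite total_eq. reflexivity. }
  rewrite (alg z PE PO P1 QE QO Q1) in Hfin; auto.
Qed.
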